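(* Let $M$ be a finite abelian group of order $m$, $J\colon M\times M\to\mathbf{C}$, $c\in\hat{M}$ with $c^2=1$, and $i\colon\hat{M}\setminus\{c\}\to\hat{M}\setminus\{1\}$ a bijection with $i(x)=x\,i(x^{-1})$ for all $x\ne c$, such that $J(\alpha,\beta)=\frac{1}{m}\sum_{x\in\hat{M}\setminus\{c\}}\alpha(i(x))\beta(i(x)x^{-1})$ for all $\alpha,\beta\in M$. Let $F=\hat{M}\sqcup\{0\}$ with the operation $\oplus$ for which $0$ is the identity and, for $x,y\ne0$, $x\oplus y=0$ if $x=cy$ and $x\oplus y=x\,i(x/y)^{-1}$ otherwise. Then \[ J(\alpha,\beta)=\frac{1}{m}\sum_{\substack{x\oplus y=1,\\ x,y\in F\setminus\{0\}}}\alpha(x)\beta(y)\quad\text{for all }\alpha,\beta\in M. \]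
   Context: $\hat{M}$ is the Pontryagin dual of $M$, written multiplicatively with identity $1$; for $\alpha\in M$, $x\in\hat{M}$, $\alpha(x)$ is the value of the character $x$ at $\alpha$. (In the paper, $J$ is a Jacobi function, but this is not used.) *)

(* Defs.v *)
From mathcomp Require Import all_boot all_order all_algebra all_fingroup all_solvable all_field all_character.
Set Implicit Arguments. Unset Strict Implicit. Unset Printing Implicit Defensive.
Import GRing.Theory Num.Theory.
Local Open Scope ring_scope.

(* The Pontryagin dual of a finite abelian group G is represented by the
   irreducible (= linear) characters of G, indexed by Iirr G.
   Group law on the dual: pointwise product of characters. *)
Definition dmul (gT : finGroupType) (G : {group gT}) (x y : Iirr G) : Iirr G :=
  cfIirr ('chi_x * 'chi_y)%R.
Definition dinv (gT : finGroupType) (G : {group gT}) (x : Iirr G) : Iirr G :=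
  conjC_Iirr x.

(* F = dual ⊔ {0}, with None playing the role of 0. *)
Definition oplus (gT : finGroupType) (G : {group gT}) (c : Iirr G)
    (i : Iirr G -> Iirr G) (u v : option (Iirr G)) : option (Iirr G) :=
  match u, v with
  | None, _ => v
  | _, None => u
  | Some x, Some y =>
      if x == dmul c y then None
      else Some (dmul x (dinv (i (dmul x (dinv y)))))
  end.

(* Main.v *)
Require Import Defs.
From mathcomp Require Import all_boot all_order all_algebra all_fingroup all_solvable all_field all_character.
Import GRing.Theory Num.Theory.
Local Open Scope ring_scope.

Section S.
Variables (gT : finGroupType) (G : {group gT}) (abG : abelian G).
Local Notation X x := ('chi[G]_x).

Lemma linX x : X x \is a linear_char.
Proof. exact: (char_abelianP _ abG). Qed.

Lemma unitX x : X x \is a GRing.unit.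
Proof. exact: lin_char_unitr (linX x). Qed.

Lemma dmulE x y : X (dmul x y) = X x * X y.
Proof. by rewrite /dmul cfIirrE // lin_char_irr // rpredM // linX. Qed.

Lemma dinvE x : X (dinv x) = (X x)^-1.
Proof. by rewrite /dinv conjC_IirrE invr_lin_char // linX. Qed.

Lemma XinjE x y : (x == y) = (X x == X y).
Proof. by apply/eqP/eqP => [->//|/irr_inj]. Qed.
End S.
Theorem mainTheorem10 (gT : finGroupType) (G : {group gT}) (abG : abelian G)
  (J : gT -> gT -> algC) (c : Iirr G) (i : Iirr G -> Iirr G)
  (hc : dmul c c = 0)
  (hi_range : forall x, x != c -> i x != 0)
  (hi_inj : {in [pred x | x != c] &, injective i})
  (hi_surj : forall y, y != 0 -> exists2 x, x != c & i x = y)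
  (hi_rel : forall x, x != c -> i x = dmul x (i (dinv x)))
  (hJ : forall a b, a \in G -> b \in G ->
     J a b = (#|G|%:R)^-1 *
       \sum_(x : Iirr G | x != c) 'chi_(i x) a * 'chi_(dmul (i x) (dinv x)) b) :
  forall a b, a \in G -> b \in G ->
    J a b = (#|G|%:R)^-1 *
      \sum_(x : Iirr G) \sum_(y : Iirr G | oplus c i (Some x) (Some y) == Some 0)
         'chi_x a * 'chi_y b.
Proof.
move=> a b Ha Hb; rewrite hJ //; congr (_ * _).
have E := @dmulE _ _ abG; have V := @dinvE _ _ abG; have U := @unitX _ _ abG.
set h := fun z => (i z, dmul (i z) (dinv z)).
set h' := fun p : Iirr G * Iirr G => dmul p.1 (dinv p.2).
have hh' : forall z, h' (h z) = z.
  move=> z; apply/eqP; rewrite /h' /h /= (@XinjE _ G) !(E, V) invrM ?unitrV ?U // invrK mulrCA mulrV ?U ?mulr1 //.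
have hh2 (z : Iirr G) : dmul (i z) (dinv (dmul (i z) (dinv z))) = z := hh' z.
have dV (x : Iirr G) : dmul x (dinv x) = 0.
  by apply: irr_inj; rewrite E V irr0 mulrV ?U.
have key (z : Iirr G) : (i z == dmul c (dmul (i z) (dinv z))) = (z == c).
  rewrite !(@XinjE _ G) !(E, V) mulrCA.
  apply/eqP/eqP => [H|->]; last by rewrite mulrV ?U ?mulr1.
  have H1 : 'chi_(i z) * 1 = 'chi_(i z) * ('chi_c / 'chi_z) by rewrite mulr1.
  move/(mulrI (U _)): H1 => H1.
  by rewrite -[LHS]mul1r H1 divrK ?U.
rewrite pair_big_dep /= (reindex_onto h h') /=.
  apply: eq_big => // z; rewrite hh' eqxx andbT /=.
  rewrite hh2 dV key; by case: (z == c).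
case=> x y /=; case: ifP => // Hx /eqP [] H.
have Hi : i (dmul x (dinv y)) = x.
  apply/eqP; rewrite eq_sym (@XinjE _ G); apply/eqP.
  move: H => /(congr1 (fun k => 'chi[G]_k)); rewrite E V irr0 => H.
  by rewrite -[RHS]mulr1 -H mulrCA mulrV ?U ?mulr1.
rewrite /h /h' /= Hi; congr pair; apply/eqP; rewrite (@XinjE _ G) !(E, V).
by rewrite invrM ?unitrV ?U // invrK mulrCA mulrV ?U ?mulr1.
Qed.
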